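(* Let $S$ be a nonempty product-free set of positive integers (i.e. there are no $a,b,c\in S$, not necessarily distinct, with $ab=c$), and let $a$ be the least element of $S$. Then the upper asymptotic density of $S$ satisfies $$ \limsup_{x\to\infty}\frac{|S\cap[1,x]|}{x} \le 1-\frac{1}{2a}. $$ More precisely, $|S\cap[1,x]|\le x-\frac12\lfloor x/a\rfloor$ for every real $x\ge a$. *)

(* Defs.v *)
From Stdlib Require Import Reals List Arith ZArith.
Open Scope R_scope.

Definition countUpTo (S : nat -> bool) (x : R) : nat :=
  length (filter S (seq 1 (Z.to_nat (Int_part x)))).

(* Main.v *)
Require Import Defs.
From Stdlib Require Import Reals List Arith ZArith Lia Lra.
Open Scope R_scope.

Fixpoint cS (S : nat -> bool) (n : nat) : nat :=
  match n with 0 => 0 | Datatypes.S k => (cS S k + (if S (Datatypes.S k) then 1 else 0))%nat end.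
Fixpoint nS (S : nat -> bool) (n : nat) : nat :=
  match n with 0 => 0 | Datatypes.S k => (nS S k + (if S (Datatypes.S k) then 0 else 1))%nat end.

Lemma cn_sum S n : (cS S n + nS S n = n)%nat.
Proof. induction n; simpl; auto. destruct (S (Datatypes.S n)); lia. Qed.

Lemma Int_part_IZR z : Int_part (IZR z) = z.
Proof. symmetry. apply Int_part_spec. lra. Qed.

Lemma count_cS S m : countUpTo S (INR m) = cS S m.
Proof.
  unfold countUpTo. rewrite INR_IZR_INZ, Int_part_IZR, Nat2Z.id.
  induction m; [reflexivity|].
  rewrite seq_S, filter_app, length_app, IHm. simpl.
  destruct (S (Datatypes.S m)); simpl; lia.
Qed.

Lemma nS_mono S n k : (nS S n <= nS S (n + k))%nat.
Proof. induction k; [rewrite Nat.add_0_r; lia|]. rewrite Nat.add_succ_r. simpl. lia. Qed.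

Lemma nS_mono' S n m : (n <= m)%nat -> (nS S n <= nS S m)%nat.
Proof. intros H. replace m with (n + (m - n))%nat by lia. apply nS_mono. Qed.

Lemma key S a (Hpf : forall x y z, S x = true -> S y = true -> S z = true -> (x * y)%nat <> z)
  (Ha : S a = true) (Ha1 : (1 <= a)%nat) q : (cS S q <= nS S (a * q))%nat.
Proof.
  induction q; [simpl; lia|].
  destruct a as [|a']; [lia|].
  rewrite Nat.mul_succ_r.
  remember (Datatypes.S a' * q)%nat as b eqn:Hb.
  replace (b + Datatypes.S a')%nat with (Datatypes.S (b + a')) by lia.
  change (cS S (Datatypes.S q)) with (cS S q + (if S (Datatypes.S q) then 1 else 0))%nat.
  change (nS S (Datatypes.S (b + a'))) with (nS S (b + a') + (if S (Datatypes.S (b + a')) then 0 else 1))%nat.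
  pose proof (nS_mono S b a').
  destruct (S (Datatypes.S q)) eqn:E.
  - destruct (S (Datatypes.S (b + a'))) eqn:E2.
    + exfalso. apply (Hpf _ _ _ Ha E E2). lia.
    + lia.
  - destruct (S (Datatypes.S (b + a'))); lia.
Qed.

Theorem mainTheorem6 (S : nat -> bool) (a : nat)
  (Hpos : forall n, S n = true -> (1 <= n)%nat)
  (Hpf : forall x y z, S x = true -> S y = true -> S z = true -> (x * y)%nat <> z)
  (Ha : S a = true)
  (Hmin : forall n, S n = true -> (a <= n)%nat) :
  (forall eps : R, eps > 0 -> exists N : R, forall x : R, x >= N ->
      INR (countUpTo S x) / x <= 1 - 1 / (2 * INR a) + eps)
  /\
  (forall x : R, x >= INR a ->
      INR (countUpTo S x) <= x - (1 / 2) * IZR (Int_part (x / INR a))).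
Proof.
  assert (Ha1 : (1 <= a)%nat) by auto.
  assert (Ha2 : (2 <= a)%nat).
  { destruct (Nat.eq_dec a 1) as [->|]; [|lia]. exfalso. apply (Hpf 1%nat 1%nat 1%nat); auto. }
  assert (HaR : 2 <= INR a) by (replace 2 with (INR 2) by (simpl; lra); apply le_INR; auto).
  assert (P2 : forall x : R, x >= INR a ->
      INR (countUpTo S x) <= x - (1 / 2) * IZR (Int_part (x / INR a))).
  { intros x Hx.
    destruct (base_Int_part x) as [B1 B2].
    assert (Hnn : (0 <= Int_part x)%Z).
    { apply Z.lt_succ_r. apply lt_IZR. rewrite succ_IZR. simpl. lra. }
    set (m := Z.to_nat (Int_part x)).
    assert (Hm : INR m = IZR (Int_part x)).
    { unfold m. rewrite INR_IZR_INZ, Z2Nat.id; auto. }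
    assert (Hc : countUpTo S x = countUpTo S (INR m)).
    { unfold countUpTo. rewrite Hm, Int_part_IZR. reflexivity. }
    rewrite Hc, count_cS.
    set (q := (m / a)%nat).
    assert (Hq1 : (a * q <= m)%nat) by (apply Nat.Div0.mul_div_le).
    assert (Hq2 : (m < a * Datatypes.S q)%nat) by (apply Nat.mul_succ_div_gt; lia).
    assert (K1 : (cS S q <= nS S m)%nat).
    { eapply Nat.le_trans. apply (key S a Hpf Ha Ha1 q). apply nS_mono'; auto. }
    assert (K2 : (nS S q <= nS S m)%nat).
    { apply nS_mono'. nia. }
    pose proof (cn_sum S q). pose proof (cn_sum S m).
    assert (K : (cS S m + cS S m + q <= m + m)%nat) by lia.
    apply le_INR in K. rewrite !plus_INR in K.
    assert (F : IZR (Int_part (x / INR a)) <= INR q).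
    { destruct (base_Int_part (x / INR a)) as [C1 C2].
      assert (x < (INR q + 1) * INR a).
      { assert (Hq3 : (Datatypes.S m <= a * Datatypes.S q)%nat) by lia. apply le_INR in Hq3. rewrite mult_INR, !S_INR in Hq3. lra. }
      assert (x / INR a < INR q + 1).
      { apply Rmult_lt_reg_r with (INR a); [lra|].
        unfold Rdiv. rewrite Rmult_assoc, Rinv_l; lra. }
      rewrite (INR_IZR_INZ q). apply IZR_le.
      apply Z.lt_succ_r. apply lt_IZR. rewrite succ_IZR, <- (INR_IZR_INZ q). lra. }
    lra. }
  split; [|exact P2].
  intros eps Heps. exists (INR a + 1 / eps). intros x Hx.
  assert (He : 0 < 1 / eps) by (apply Rdiv_lt_0_compat; lra).
  assert (Hx' : x >= INR a) by lra.
  pose proof (P2 x Hx') as H.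
  destruct (base_Int_part (x / INR a)) as [C1 C2].
  assert (xpos : 0 < x) by lra.
  apply Rmult_le_reg_r with x; [lra|].
  unfold Rdiv at 1. rewrite Rmult_assoc, Rinv_l by lra. rewrite Rmult_1_r.
  assert (E1 : x / INR a = x * (1 / (2 * INR a)) * 2) by (field; lra).
  assert (E2 : eps * x >= 1).
  { assert (eps * x >= eps * (1/eps)) by (apply Rle_ge, Rmult_le_compat_l; lra).
    replace (eps * (1/eps)) with 1 in H0 by (field; lra). lra. }
  nra.
Qed.
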